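(* Let $X$ be a path-connected space with base point $x_0$. Then $\mathbf{ltc}_n(X)=\mathbf{tc}_n(X)$ for every $n\ge1$, and $\mathbf{LTC}_n(X)=\mathbf{TC}_n(X)$ for every $n\ge 2$.
   Context: $I=[0,1]$. Path spaces with compact-open topology: $P_{x_0}X=\{f:I\to X\mid f(0)=x_0\}$, $\Omega_{x_0}X=\{f:I\to X\mid f(0)=f(1)=x_0\}$, $PX=\{f:I\to X\}$, $LX=\{f:I\to X\mid f(0)=f(1)\}$. Maps: $p_n:P_{x_0}X\to X^n$, $p_n(f)=(f(1/n),\dots,f((n-1)/n),f(1))$; $q_n:\Omega_{x_0}X\to X^n$, $q_n(f)=(f(1/(n+1)),\dots,f(n/(n+1)))$; $P_n:PX\to X^n$, $P_n(f)=(f(0),f(1/(n-1)),\dots,f((n-2)/(n-1)),f(1))$; $Q_n:LX\to X^n$, $Q_n(f)=(f(0),f(1/n),\dots,f((n-1)/n))$. For a map $p:E\to B$, the Schwarz genus $\mathbf{Sch}(p)$ is the least number $k$ of open sets $U_1,\dots,U_k$ covering $B$ such that over each $U_i$ there is a continuous map $s:U_i\to E$ with $p\circ s$ equal to the inclusion; $\mathbf{Sch}(p)=\infty$ if no such finite cover exists. Define $\mathbf{TC}_n(X)=\mathbf{Sch}(P_n)$ and $\mathbf{LTC}_n(X)=\mathbf{Sch}(Q_n)$ for $n\ge2$, and $\mathbf{tc}_n(X)=\mathbf{Sch}(p_n)$ and $\mathbf{ltc}_n(X)=\mathbf{Sch}(q_n)$ for $n\ge1$. *)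

(* Defs.v *)
From Stdlib Require Import Reals Lra ClassicalEpsilon.
Open Scope R_scope.

Set Implicit Arguments.

Definition is_topology {T : Type} (O : (T -> Prop) -> Prop) : Prop :=
  O (fun _ => True) /\
  (forall U V, O U -> O V -> O (fun x => U x /\ V x)) /\
  (forall F : (T -> Prop) -> Prop,
      (forall U, F U -> O U) -> O (fun x => exists U, F U /\ U x)).

Record Top := mkTop {
  carrier :> Type;
  topen : (carrier -> Prop) -> Prop;
  topen_is_topology : is_topology topen }.

Definition generated {T : Type} (S : (T -> Prop) -> Prop) (U : T -> Prop) : Prop :=
  forall O, is_topology O -> (forall V, S V -> O V) -> O U.

Lemma generated_is_topology {T : Type} (S : (T -> Prop) -> Prop) :
  is_topology (generated S).
Proof.
  split; [|split].
  - intros O [h1 _] _; exact h1.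
  - intros U V HU HV O HO HS. pose proof HO as [_ [h2 _]].
    apply h2; [apply HU | apply HV]; assumption.
  - intros F HF O HO HS. pose proof HO as [_ [_ h3]].
    apply h3. intros U FU. apply HF; auto.
Qed.

Definition genTop (T : Type) (S : (T -> Prop) -> Prop) : Top :=
  mkTop (generated_is_topology S).

Definition continuous {X Y : Top} (f : X -> Y) : Prop :=
  forall U, topen Y U -> topen X (fun x => U (f x)).

(** Subspace topology on {x | P x}: generated by preimages of opens under
    the inclusion (these already form a topology, so this is the usual one). *)
Definition subTop {X : Top} (P : X -> Prop) : Top :=
  genTop (fun V : {x : X | P x} -> Prop =>
            exists U, topen X U /\ V = (fun y => U (proj1_sig y))).

Definition compact_in {X : Top} (K : X -> Prop) : Prop :=
  forall F : (X -> Prop) -> Prop,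
    (forall U, F U -> topen X U) ->
    (forall x, K x -> exists U, F U /\ U x) ->
    exists l : list (X -> Prop),
      (forall U, List.In U l -> F U) /\
      (forall x, K x -> exists U, List.In U l /\ U x).

Definition R_open (U : R -> Prop) : Prop :=
  forall x, U x -> exists e, 0 < e /\ forall y, Rabs (y - x) < e -> U y.

Definition RTop : Top := genTop R_open.

Definition Itop : Top := @subTop RTop (fun t : R => 0 <= t <= 1).

Lemma clamp_in (r : R) : 0 <= Rmax 0 (Rmin 1 r) <= 1.
Proof.
  split.
  - apply Rmax_l.
  - apply Rmax_lub; [lra | apply Rmin_l].
Qed.

(** The point of I given by r, clamped to [0,1] (only used with r in [0,1]). *)
Definition pt (r : R) : Itop := exist _ (Rmax 0 (Rmin 1 r)) (clamp_in r).

Definition Paths (X : Top) : Type := {f : Itop -> X | continuous f}.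

Definition PX (X : Top) : Top :=
  genTop (fun W : Paths X -> Prop =>
    exists (K : Itop -> Prop) (U : X -> Prop),
      compact_in K /\ topen X U /\
      W = (fun f => forall t, K t -> U (proj1_sig f t))).

Definition ev {X : Top} (f : PX X) (r : R) : X := proj1_sig f (pt r).

Definition PbX (X : Top) (x0 : X) : Top := subTop (fun f : PX X => ev f 0 = x0).
Definition OmegaX (X : Top) (x0 : X) : Top :=
  subTop (fun f : PX X => ev f 0 = x0 /\ ev f 1 = x0).
Definition LX (X : Top) : Top := subTop (fun f : PX X => ev f 0 = ev f 1).

Definition idx (n : nat) : Type := {i : nat | (i < n)%nat}.

Definition prodTop (X : Top) (n : nat) : Top :=
  genTop (fun V : (idx n -> X) -> Prop =>
    exists (i : idx n) (U : X -> Prop), topen X U /\ V = (fun x => U (x i))).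

(* p_n(f) = (f(1/n), ..., f((n-1)/n), f(1)) : component i (0 <= i < n) is f((i+1)/n) *)
Definition p_map (X : Top) (x0 : X) (n : nat) (f : PbX X x0) : prodTop X n :=
  fun i => ev (proj1_sig f) (INR (S (proj1_sig i)) / INR n).

(* q_n(f) = (f(1/(n+1)), ..., f(n/(n+1))) : component i is f((i+1)/(n+1)) *)
Definition q_map (X : Top) (x0 : X) (n : nat) (f : OmegaX X x0) : prodTop X n :=
  fun i => ev (proj1_sig f) (INR (S (proj1_sig i)) / INR (S n)).

(* P_n(f) = (f(0), f(1/(n-1)), ..., f((n-2)/(n-1)), f(1)) : component i is f(i/(n-1)) *)
Definition P_map (X : Top) (n : nat) (f : PX X) : prodTop X n :=
  fun i => ev f (INR (proj1_sig i) / INR (n - 1)).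

(* Q_n(f) = (f(0), f(1/n), ..., f((n-1)/n)) : component i is f(i/n) *)
Definition Q_map (X : Top) (n : nat) (f : LX X) : prodTop X n :=
  fun i => ev (proj1_sig f) (INR (proj1_sig i) / INR n).

Definition sect_cover {E B : Top} (p : E -> B) (k : nat) : Prop :=
  exists U : nat -> (B -> Prop),
    (forall i, (i < k)%nat -> topen B (U i)) /\
    (forall b, exists i, (i < k)%nat /\ U i b) /\
    (forall i, (i < k)%nat ->
       exists s : subTop (U i) -> E,
         continuous s /\ forall b, p (s b) = proj1_sig b).

(** Sch p : Some k = the least such k; None = ∞ (no finite cover). *)
Definition Sch {E B : Top} (p : E -> B) : option nat :=
  epsilon (inhabits None) (fun o : option nat =>
    match o with
    | Some k => sect_cover p k /\ forall j, (j < k)%nat -> ~ sect_cover p j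
    | None => forall k, ~ sect_cover p k
    end).

Definition tc (X : Top) (x0 : X) (n : nat) : option nat := Sch (@p_map X x0 n).
Definition ltc (X : Top) (x0 : X) (n : nat) : option nat := Sch (@q_map X x0 n).
Definition TC (X : Top) (n : nat) : option nat := Sch (@P_map X n).
Definition LTC (X : Top) (n : nat) : option nat := Sch (@Q_map X n).

Definition path_connected (X : Top) : Prop :=
  forall x y : X, exists g : Itop -> X,
    continuous g /\ g (pt 0) = x /\ g (pt 1) = y.

(* Main.v *)
Require Import Defs.
From Stdlib Require Import Reals.
From Stdlib Require Import Lra Psatz List FunctionalExtensionality PropExtensionality ProofIrrelevance ClassicalEpsilon.
Open Scope R_scope.

Lemma gen_base {T : Type} (S : (T -> Prop) -> Prop) V : S V -> generated S V.
Proof. intros H O HO HS. apply HS, H. Qed.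

Lemma cont_to_gen {Y : Top} {T : Type} (S : (T -> Prop) -> Prop) (f : Y -> genTop S) :
  (forall V, S V -> topen Y (fun y => V (f y))) -> continuous f.
Proof.
  intros H U HU.
  apply (HU (fun W => topen Y (fun x => W (f x)))); [|exact H].
  destruct (topen_is_topology Y) as [t1 [t2 t3]].
  split; [exact t1|split].
  - intros U1 V1 h1 h2; apply t2; auto.
  - intros F HF.
    assert (E: (fun y => exists U, F U /\ U (f y)) =
               (fun y => exists W, (exists U, F U /\ W = (fun y => U (f y))) /\ W y)).
    { extensionality y; apply propositional_extensionality; split.
      - intros [U1 [h1 h2]]. exists (fun y => U1 (f y)); split; eauto.
      - intros [W [[U1 [h1 ->]] h2]]; eauto. }
    cbv beta. rewrite E. apply t3. intros W [U1 [h1 ->]]. apply HF; auto.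
Qed.

Lemma R_open_top : is_topology R_open.
Proof.
  split; [|split].
  - intros x _. exists 1; split; [lra|auto].
  - intros U V hU hV x [hx1 hx2].
    destruct (hU x hx1) as [e1 [he1 h1]]. destruct (hV x hx2) as [e2 [he2 h2]].
    exists (Rmin e1 e2). split. apply Rmin_glb_lt; auto.
    intros y hy. split; [apply h1|apply h2];
      eapply Rlt_le_trans; eauto; [apply Rmin_l|apply Rmin_r].
  - intros F HF x [U [hU hx]].
    destruct (HF U hU x hx) as [e [he h]]. exists e; split; auto.
    intros y hy. exists U; auto.
Qed.

Lemma RTop_open_iff U : topen RTop U <-> R_open U.
Proof.
  split.
  - intros H. apply (H R_open R_open_top). auto.
  - intros H. apply gen_base, H.
Qed.

Definition clamp (r : R) : R := Rmax 0 (Rmin 1 r).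

Lemma clamp_lip x y : Rabs (clamp x - clamp y) <= Rabs (x - y).
Proof.
  unfold clamp, Rmax, Rmin.
  repeat destruct Rle_dec; unfold Rabs; repeat destruct Rcase_abs; lra.
Qed.

Lemma clamp_id x : 0 <= x <= 1 -> clamp x = x.
Proof. unfold clamp, Rmax, Rmin; intros; repeat destruct Rle_dec; lra. Qed.

Lemma lip_open g L : 0 < L -> (forall x y, Rabs (g x - g y) <= L * Rabs (x - y)) ->
  forall U, R_open U -> R_open (fun r => U (g r)).
Proof.
  intros hL hg U hU x hx. destruct (hU _ hx) as [e [he h]].
  exists (e / L). split. apply Rdiv_lt_0_compat; auto.
  intros y hy. apply h. eapply Rle_lt_trans. apply hg.
  apply Rmult_lt_compat_l with (r := L) in hy; auto.
  replace (L * (e / L)) with e in hy by (field; lra). exact hy.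
Qed.

Definition psi (g : R -> R) (y : Itop) : Itop := pt (g (proj1_sig y)).

Lemma psi_cont g L : 0 < L -> (forall x y, Rabs (g x - g y) <= L * Rabs (x - y)) ->
  continuous (psi g).
Proof.
  intros hL hg. unfold Itop, subTop. apply cont_to_gen.
  intros V [U [hU ->]]. apply gen_base.
  exists (fun r => U (clamp (g r))). split; [|reflexivity].
  apply RTop_open_iff. pose proof (proj1 (RTop_open_iff U) hU) as hU'.
  apply (lip_open (fun r => clamp (g r)) L hL); auto; [idtac].
  intros x y. eapply Rle_trans. apply clamp_lip. apply hg.
Qed.

Lemma compact_image (ps : Itop -> Itop) : continuous ps ->
  forall K, compact_in K -> compact_in (fun t => exists s, K s /\ ps s = t).
Proof.
  intros hc K hK F HF Hcov.
  destruct (hK (fun W => exists U, F U /\ W = (fun x => U (ps x)))) as [l' [hl1 hl2]].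
  - intros W [U [hU ->]]. apply hc, HF, hU.
  - intros x hx. destruct (Hcov (ps x)) as [U [h1 h2]]. eauto.
    exists (fun x => U (ps x)); split; [exists U; auto | exact h2].
  - assert (L: exists l, (forall U, In U l -> F U) /\
             forall W, In W l' -> exists U, In U l /\ W = (fun x => U (ps x))).
    { clear hl2. induction l' as [|W l' IH].
      - exists nil; split; intros; contradiction.
      - destruct IH as [l [a b]]. { intros; apply hl1; right; auto. }
        destruct (hl1 W (or_introl eq_refl)) as [U [hU e]].
        exists (U :: l). split.
        + intros U' [<-|h]; auto.
        + intros W' [<-|h].
          * exists U; split; [left|]; auto.
          * destruct (b W' h) as [U'' [x y]]; exists U''; split; [right|]; auto. }
    destruct L as [l [a b]]. exists l; split; auto.
    intros t [s [hs <-]]. destruct (hl2 s hs) as [W [hW hWs]].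
    destruct (b W hW) as [U [hU ->]]. eauto.
Qed.

Definition pre {X : Top} (ps : Itop -> Itop) (hps : continuous ps) (f : PX X) : PX X.
Proof.
  exists (fun t => proj1_sig f (ps t)).
  intros U HU. apply (hps (fun t => U (proj1_sig f t))). apply (proj2_sig f). exact HU.
Defined.

Lemma pre_cont {X : Top} ps hps : continuous (@pre X ps hps).
Proof.
  unfold PX at 2. apply cont_to_gen.
  intros V [K [U [hK [hU ->]]]].
  assert (E : (fun y : PX X => forall t, K t -> U (proj1_sig (pre ps hps y) t)) =
              (fun y : PX X => forall t, (fun t => exists s, K s /\ ps s = t) t ->
                    U (proj1_sig y t))).
  { extensionality y; apply propositional_extensionality; simpl; split.
    - intros h t [s [hs <-]]. auto.
    - intros h t ht. apply h. eauto. }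
  rewrite E. apply gen_base. do 2 eexists. split; [|split; [exact hU|reflexivity]].
  apply compact_image; auto.
Qed.

Lemma cont_val {X : Top} (P : X -> Prop) : continuous (X:=subTop P) (fun y => proj1_sig y).
Proof. intros U hU. apply gen_base. exists U; split; auto. Qed.

Lemma cont_into {Y X : Top} (P : X -> Prop) (f : Y -> X) (hP : forall y, P (f y)) :
  continuous f -> continuous (Y:=subTop P) (fun y => exist P (f y) (hP y)).
Proof.
  intros hf. unfold subTop. apply cont_to_gen. intros V [U [hU ->]]. simpl. apply hf, hU.
Qed.

Lemma sect_transfer {E1 E2 B : Top} (p1 : E1 -> B) (p2 : E2 -> B) (h : E1 -> E2) :
  continuous h -> (forall e, p2 (h e) = p1 e) ->
  forall k, sect_cover p1 k -> sect_cover p2 k.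
Proof.
  intros hc hp k [U [HU [Hcov Hs]]]. exists U; split; [|split]; auto.
  intros i hi. destruct (Hs i hi) as [s [sc sp]].
  exists (fun b => h (s b)). split.
  - intros V HV. apply (sc (fun e => V (h e))). apply hc. exact HV.
  - intros b; rewrite hp; apply sp.
Qed.

Lemma Sch_eq {E1 E2 B : Top} (p1 : E1 -> B) (p2 : E2 -> B) :
  (forall k, sect_cover p1 k <-> sect_cover p2 k) -> Sch p1 = Sch p2.
Proof.
  intros H. unfold Sch. f_equal. extensionality o.
  apply propositional_extensionality. destruct o as [k|].
  - split; intros [a b]; split.
    + apply H, a.
    + intros j hj c. apply (b j hj), H, c.
    + apply H, a.
    + intros j hj c. apply (b j hj), H, c.
  - split; intros a k c; apply (a k), H, c.
Qed.

Lemma pt_eq a b : clamp a = clamp b -> pt a = pt b.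
Proof.
  intros H. unfold pt. apply subset_eq_compat. exact H.
Qed.

Lemma ev_pre {X : Top} g hc (f : PX X) r r' :
  clamp (g (clamp r)) = clamp r' -> ev (pre (psi g) hc f) r = ev f r'.
Proof. intros H. unfold ev; simpl. f_equal. apply pt_eq. exact H. Qed.

Definition tent a b (t : R) := Rmin (a * t) (b * (1 - t)).

Lemma tent_lip a b : 0 <= a -> 0 <= b ->
  forall x y, Rabs (tent a b x - tent a b y) <= (a + b + 1) * Rabs (x - y).
Proof.
  intros ha hb x y. unfold tent.
  assert (h1 : Rabs (Rmin (a*x) (b*(1-x)) - Rmin (a*y) (b*(1-y))) <=
               Rabs (a*x - a*y) + Rabs (b*(1-x) - b*(1-y))).
  { unfold Rmin. repeat destruct Rle_dec; unfold Rabs; repeat destruct Rcase_abs; lra. }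
  replace (a*x - a*y) with (a*(x-y)) in h1 by ring.
  replace (b*(1-x) - b*(1-y)) with (b*(y-x)) in h1 by ring.
  rewrite !Rabs_mult, (Rabs_pos_eq a), (Rabs_pos_eq b), (Rabs_minus_sym y x) in h1; auto.
  pose proof (Rabs_pos (x-y)). nra.
Qed.

Lemma scale_lip c : 0 <= c -> forall x y, Rabs (c * x - c * y) <= (c + 1) * Rabs (x - y).
Proof.
  intros hc x y. replace (c*x - c*y) with (c*(x-y)) by ring.
  rewrite Rabs_mult, Rabs_pos_eq; auto. pose proof (Rabs_pos (x-y)). nra.
Qed.

Lemma tent_cont a b : 0 <= a -> 0 <= b -> continuous (psi (tent a b)).
Proof. intros. apply (psi_cont _ (a+b+1)); [lra|apply tent_lip; auto]. Qed.

Lemma scale_cont c : 0 <= c -> continuous (psi (fun t => c * t)).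
Proof. intros. apply (psi_cont _ (c+1)); [lra|apply scale_lip; auto]. Qed.

Lemma tent0 a b : 0 <= b -> tent a b 0 = 0.
Proof. intros. unfold tent, Rmin. destruct Rle_dec; nra. Qed.
Lemma tent1 a b : 0 <= a -> tent a b 1 = 0.
Proof. intros. unfold tent, Rmin. destruct Rle_dec; nra. Qed.
Lemma clamp0 : clamp 0 = 0. Proof. apply clamp_id; lra. Qed.
Lemma clamp1 : clamp 1 = 1. Proof. apply clamp_id; lra. Qed.

Lemma divfact k N : 0 < N -> k / N * N = k.
Proof. intros; field; lra. Qed.

Lemma arithA N k : 1 <= N -> 1 <= k <= N ->
  clamp (tent ((N+1)/N) (N+1) (clamp (k/(N+1)))) = clamp (k/N).
Proof.
  intros hN hk.
  pose proof (divfact k (N+1) ltac:(lra)) as hr. pose proof (divfact k N ltac:(lra)) as hu.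
  set (r := k/(N+1)) in *. set (u := k/N) in *.
  assert (hr0 : 0 <= r <= 1) by nra. assert (hu0 : 0 <= u <= 1) by nra.
  rewrite (clamp_id r hr0). unfold tent.
  replace ((N+1)/N * r) with u by (unfold r, u; field; lra).
  rewrite Rmin_left; [reflexivity|]. nra.
Qed.

Lemma arithB N k : 1 <= N -> 1 <= k <= N ->
  clamp (N/(N+1) * clamp (k/N)) = clamp (k/(N+1)).
Proof.
  intros hN hk.
  pose proof (divfact k N ltac:(lra)) as hu.
  set (u := k/N) in *. assert (hu0 : 0 <= u <= 1) by nra.
  rewrite (clamp_id u hu0). f_equal. unfold u; field; lra.
Qed.

Lemma arithC N k : 2 <= N -> 0 <= k <= N - 1 ->
  clamp (tent (N/(N-1)) N (clamp (k/N))) = clamp (k/(N-1)).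
Proof.
  intros hN hk.
  pose proof (divfact k N ltac:(lra)) as hr. pose proof (divfact k (N-1) ltac:(lra)) as hu.
  set (r := k/N) in *. set (u := k/(N-1)) in *.
  assert (hr0 : 0 <= r <= 1) by nra. assert (hu0 : 0 <= u <= 1) by nra.
  rewrite (clamp_id r hr0). unfold tent.
  replace (N/(N-1) * r) with u by (unfold r, u; field; lra).
  rewrite Rmin_left; [reflexivity|]. nra.
Qed.

Lemma arithD N k : 2 <= N -> 0 <= k <= N - 1 ->
  clamp ((N-1)/N * clamp (k/(N-1))) = clamp (k/N).
Proof.
  intros hN hk.
  pose proof (divfact k (N-1) ltac:(lra)) as hu.
  set (u := k/(N-1)) in *. assert (hu0 : 0 <= u <= 1) by nra.
  rewrite (clamp_id u hu0). f_equal. unfold u; field; lra.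
Qed.

Lemma cont_comp {A B C : Top} (f : A -> B) (g : B -> C) :
  continuous f -> continuous g -> continuous (fun x => g (f x)).
Proof. intros hf hg U hU. apply (hf (fun y => U (g y))), hg, hU. Qed.

Lemma mem_tent0 {X : Top} a b (ha : 0 <= a) (hb : 0 <= b) (f : PX X) :
  ev (pre (psi (tent a b)) (tent_cont a b ha hb) f) 0 = ev f 0 /\
  ev (pre (psi (tent a b)) (tent_cont a b ha hb) f) 1 = ev f 0.
Proof.
  split; apply ev_pre; [rewrite clamp0, tent0 | rewrite clamp1, tent1]; auto.
  all: try (rewrite clamp0; reflexivity).
Qed.

Lemma mem_scale0 {X : Top} c (hc : 0 <= c) (f : PX X) :
  ev (pre (psi (fun t => c * t)) (scale_cont c hc) f) 0 = ev f 0.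
Proof. apply ev_pre. cbv beta. rewrite clamp0, Rmult_0_r, clamp0. reflexivity. Qed.

Theorem mainTheorem3 (X : Top) (x0 : X) (Hpc : path_connected X) :
  (forall n : nat, (1 <= n)%nat -> ltc X x0 n = tc X x0 n) /\
  (forall n : nat, (2 <= n)%nat -> LTC X n = TC X n).
Proof.
  split.
  - intros n hn. unfold ltc, tc. apply Sch_eq.
    assert (hN : 1 <= INR n) by (apply (le_INR 1 n); exact hn).
    assert (ha : 0 <= (INR n + 1) / INR n) by (unfold Rdiv; apply Rmult_le_pos; [lra|left; apply Rinv_0_lt_compat; lra]).
    assert (hb : 0 <= INR n + 1) by lra.
    assert (hc : 0 <= INR n / (INR n + 1)) by (unfold Rdiv; apply Rmult_le_pos; [lra|left; apply Rinv_0_lt_compat; lra]).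
    intros k; split.
    +
      unshelve eapply (sect_transfer _ _
        (fun f : OmegaX X x0 => exist (fun g : PX X => ev g 0 = x0)
           (pre _ (scale_cont _ hc) (proj1_sig f)) _ : PbX X x0)).
      * destruct f as [f [h0 h1]]. cbn [proj1_sig]. rewrite mem_scale0. exact h0.
      * apply (cont_into (X := PX X)). apply cont_comp.
        apply (cont_val (X := PX X)). apply pre_cont.
      * intros [f hf]. extensionality i. destruct i as [i hi].
        unfold p_map, q_map; cbn [proj1_sig]. apply ev_pre.
        rewrite (S_INR n). apply arithB; auto.
        pose proof (pos_INR i). rewrite S_INR. split; [lra|].
        apply (le_INR (S i) n) in hi. rewrite S_INR in hi. lra.
    +
      unshelve eapply (sect_transfer _ _
        (fun f : PbX X x0 => exist (fun g : PX X => ev g 0 = x0 /\ ev g 1 = x0)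
           (pre _ (tent_cont _ _ ha hb) (proj1_sig f)) _ : OmegaX X x0)).
      * destruct f as [f h0]. cbn [proj1_sig]. rewrite !(proj1 (mem_tent0 _ _ ha hb f)),
          (proj2 (mem_tent0 _ _ ha hb f)). auto.
      * apply (cont_into (X := PX X)). apply cont_comp.
        apply (cont_val (X := PX X)). apply pre_cont.
      * intros [f hf]. extensionality i. destruct i as [i hi].
        unfold p_map, q_map; cbn [proj1_sig]. apply ev_pre.
        rewrite (S_INR n). apply arithA; auto.
        pose proof (pos_INR i). rewrite S_INR. split; [lra|].
        apply (le_INR (S i) n) in hi. rewrite S_INR in hi. lra.
  - intros n hn. unfold LTC, TC. apply Sch_eq.
    assert (hN : 2 <= INR n) by (apply (le_INR 2 n) in hn; simpl in hn; lra).
    assert (hM : INR (n - 1) = INR n - 1) by (rewrite minus_INR; [simpl; lra| lia]).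
    assert (ha : 0 <= INR n / (INR n - 1)) by (unfold Rdiv; apply Rmult_le_pos; [lra|left; apply Rinv_0_lt_compat; lra]).
    assert (hb : 0 <= INR n) by lra.
    assert (hc : 0 <= (INR n - 1) / INR n) by (unfold Rdiv; apply Rmult_le_pos; [lra|left; apply Rinv_0_lt_compat; lra]).
    intros k; split.
    +
      apply (sect_transfer _ _
        (fun f : LX X => pre _ (scale_cont _ hc) (proj1_sig f))).
      * apply cont_comp. apply (cont_val (X := PX X)). apply pre_cont.
      * intros [f hf]. extensionality i. destruct i as [i hi].
        unfold P_map, Q_map; cbn [proj1_sig]. apply ev_pre. rewrite hM.
        apply arithD; auto.
        pose proof (pos_INR i). split; [lra|].
        apply (le_INR (S i) n) in hi. rewrite S_INR in hi. lra.
    +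
      unshelve eapply (sect_transfer _ _
        (fun f : PX X => exist (fun g : PX X => ev g 0 = ev g 1)
           (pre _ (tent_cont _ _ ha hb) f) _ : LX X)).
      * destruct (mem_tent0 _ _ ha hb f) as [e1 e2]. etransitivity; [exact e1|symmetry; exact e2].
      * apply (cont_into (X := PX X)). apply pre_cont.
      * intros f. extensionality i. destruct i as [i hi].
        unfold P_map, Q_map; cbn [proj1_sig]. apply ev_pre. rewrite hM.
        apply arithC; auto.
        pose proof (pos_INR i). split; [lra|].
        apply (le_INR (S i) n) in hi. rewrite S_INR in hi. lra.
Qed.
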